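(* Let $\lambda>0$, $B,H>0$, $d,K\ge1$. Let $\mathcal T_1,\dots,\mathcal T_K$ be nonempty disjoint finite index sets with $\sum_{k}|\mathcal T_k|\le T$, and let $\phi_{k,t}\in\mathbb R^d$ ($k\in[K]$, $t\in\mathcal T_k$) satisfy $\|\phi_{k,t}\|_2\le BH$. Define $\Lambda_1=\lambda I$ and $\Lambda_{k+1}=\Lambda_k+\sum_{t\in\mathcal T_k}\phi_{k,t}\phi_{k,t}^\top$. Then $$\sum_{k=1}^K\frac1{|\mathcal T_k|}\sum_{t\in\mathcal T_k}\log\Big(1+|\mathcal T_k|\,\|\phi_{k,t}\|^2_{\Lambda_k^{-1}}\Big)\le d\log\Big(1+\frac{B^2H^2T}{\lambda d}\Big).$$
   Context: $\|v\|_Z=\sqrt{v^\top Zv}$ for a positive definite matrix $Z$. *)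

(* Defs.v *)
From HB Require Import structures.
From mathcomp Require Import all_boot all_order all_algebra.
From mathcomp Require Import all_classical all_reals all_analysis.
Set Implicit Arguments. Unset Strict Implicit. Unset Printing Implicit Defensive.
Import Order.TTheory GRing.Theory Num.Theory.
Local Open Scope ring_scope.

(* Blocks are 0-indexed: block k (0 <= k < K) has index set {0,..,n k - 1},
   i.e. T_{k+1} of the paper; the index sets are disjoint by construction. *)

Definition norm2 (R : realType) (d : nat) (v : 'cV[R]_d) : R :=
  Num.sqrt ((v^T *m v) ord0 ord0).

Definition mnorm (R : realType) (d : nat) (Z : 'M[R]_d) (v : 'cV[R]_d) : R :=
  Num.sqrt ((v^T *m Z *m v) ord0 ord0).

(* Lambda 0 = lam I (the paper's Lambda_1);
   Lambda (k+1) = Lambda k + sum_{t < n k} phi k t phi k t^T *)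
Fixpoint Lambda (R : realType) (d : nat) (lam : R) (n : nat -> nat)
    (phi : nat -> nat -> 'cV[R]_d) (k : nat) : 'M[R]_d :=
  match k with
  | O => lam%:M
  | k'.+1 => Lambda lam n phi k' + \sum_(t < n k') (phi k' t *m (phi k' t)^T)
  end.

(* Main.v *)
Require Import Defs.
From HB Require Import structures.
From mathcomp Require Import all_boot all_order all_algebra.
From mathcomp Require Import all_classical all_reals all_analysis.
From mathcomp Require Import ring lra.
Import Order.TTheory GRing.Theory Num.Theory.
Local Open Scope ring_scope.

Set Implicit Arguments. Unset Strict Implicit. Unset Printing Implicit Defensive.

Definition bil (R : realType) (d : nat) (S : 'M[R]_d) (x y : 'cV[R]_d) : R :=
  (x^T *m S *m y) 0 0.

Definition psd (R : realType) (d : nat) (S : 'M[R]_d) :=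
  S^T = S /\ forall x, 0 <= bil S x x.
Definition pd (R : realType) (d : nat) (S : 'M[R]_d) :=
  S^T = S /\ forall x, x != 0 -> 0 < bil S x x.

Lemma bil_sym (R : realType) d (S : 'M[R]_d) x y : S^T = S -> bil S y x = bil S x y.
Proof.
move=> hS; rewrite /bil.
have -> : x^T *m S *m y = (y^T *m S *m x)^T by rewrite !trmx_mul trmxK hS mulmxA.
by rewrite [RHS]mxE.
Qed.

Lemma bilDl (R : realType) d (S : 'M[R]_d) x1 x2 y : bil S (x1 + x2) y = bil S x1 y + bil S x2 y.
Proof. by rewrite /bil linearD /= !mulmxDl mxE. Qed.
Lemma bilDr (R : realType) d (S : 'M[R]_d) x y1 y2 : bil S x (y1 + y2) = bil S x y1 + bil S x y2.
Proof. by rewrite /bil !mulmxDr mxE. Qed.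
Lemma bilZl (R : realType) d (S : 'M[R]_d) a x y : bil S (a *: x) y = a * bil S x y.
Proof. by rewrite /bil linearZ /= -!scalemxAl mxE. Qed.
Lemma bilZr (R : realType) d (S : 'M[R]_d) a x y : bil S x (a *: y) = a * bil S x y.
Proof. by rewrite /bil -!scalemxAr mxE. Qed.
Lemma bilMD (R : realType) d (S1 S2 : 'M[R]_d) x y : bil (S1 + S2) x y = bil S1 x y + bil S2 x y.
Proof. by rewrite /bil mulmxDr mulmxDl mxE. Qed.
Lemma bilMN (R : realType) d (S : 'M[R]_d) x y : bil (- S) x y = - bil S x y.
Proof. by rewrite /bil mulmxN mulNmx mxE. Qed.
Lemma bilMZ (R : realType) d (S : 'M[R]_d) a x y : bil (a *: S) x y = a * bil S x y.
Proof. by rewrite /bil -scalemxAr -scalemxAl mxE. Qed.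
Lemma bil_sum (R : realType) d I (r : seq I) (F : I -> 'M[R]_d) x y :
  bil (\sum_(i <- r) F i) x y = \sum_(i <- r) bil (F i) x y.
Proof.
elim: r => [|a r IH]; first by rewrite !big_nil /bil mulmx0 mul0mx mxE.
by rewrite !big_cons bilMD IH.
Qed.

Lemma mx11_mulE (R : realType) d (a : 'rV[R]_d) (b : 'cV[R]_d) (c : 'rV[R]_d) (e : 'cV[R]_d) :
  ((a *m b) *m (c *m e)) 0 0 = (a *m b) 0 0 * (c *m e) 0 0.
Proof. by rewrite mxE big_ord1. Qed.

Lemma bil_rank1 (R : realType) d (f x y : 'cV[R]_d) :
  bil (f *m f^T) x y = bil 1%:M x f * bil 1%:M f y.
Proof.
by rewrite /bil !mulmx1 !mulmxA -(mulmxA _ _ y) mx11_mulE.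
Qed.

Lemma bil1_sym (R : realType) d (x y : 'cV[R]_d) : bil 1%:M x y = bil 1%:M y x.
Proof. by apply: bil_sym; rewrite trmx1. Qed.

Lemma sqr_pos (R : realType) d (x : 'cV[R]_d) : x != 0 -> 0 < bil 1%:M x x.
Proof.
move=> hx; rewrite /bil mulmx1 mxE.
have [i hi] : exists i, x i 0 != 0.
  apply/existsP; apply: contraR hx => /existsPn h; apply/eqP/matrixP => i j.
  by rewrite ord1 mxE; apply/eqP; move: (h i); rewrite negbK.
rewrite (bigD1 i) //=; apply: ltr_wpDr.
  by apply: sumr_ge0 => j _; rewrite mxE -expr2 sqr_ge0.
by rewrite mxE -expr2 exprn_even_gt0.
Qed.


Lemma bil_CS (R : realType) d (S : 'M[R]_d) x y : psd S ->
  bil S x y ^+ 2 <= bil S x x * bil S y y.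
Proof.
move=> [hS hq].
have h s t : 0 <= s ^+ 2 * bil S x x + 2 * s * t * bil S x y + t ^+ 2 * bil S y y.
  have := hq (s *: x + t *: y).
  rewrite !(bilDl, bilDr, bilZl, bilZr) (bil_sym y x hS).
  by congr (0 <= _); ring.
have hx := hq x; have hy := hq y.
set a := bil S x x in h hx *; set b := bil S y y in h hy *; set c := bil S x y in h *.
have [b0|bpos] := eqVneq b 0.
  have := h c (- (a + 2)); rewrite b0 => h'.
  have -> : c = 0 by nra.
  by rewrite expr0n /= mulr0n; nra.
have bp : 0 < b by rewrite lt_neqAle eq_sym bpos hy.
have := h b (- c) => h'.
have : 0 <= b * (a * b - c ^+ 2) by nra.
rewrite pmulr_rge0 // => h''; nra.
Qed.


Lemma bil_block (R : realType) n (a w : R) (b : 'rV[R]_n) (c : 'cV[R]_n) (D : 'M[R]_n) y :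
  bil (block_mx (a%:M) b c D : 'M[R]_(1 + n)) (col_mx (w%:M) y) (col_mx (w%:M) y) =
  a * w ^+ 2 + w * (b *m y) 0 0 + w * (y^T *m c) 0 0 + bil D y y.
Proof.
rewrite /bil tr_col_mx mul_row_block mul_row_col tr_scalar_mx !mul_scalar_mx.
rewrite mxE mul_mx_scalar mulmxDl -scalemxAl !mxE !eqxx /= mulr1n.
ring.
Qed.

Lemma det_block1 (R : realType) n (a : R) (b : 'rV[R]_n) (c : 'cV[R]_n) (D : 'M[R]_n) :
  a != 0 ->
  \det (block_mx (a%:M) b c D : 'M[R]_(1 + n)) = a * \det (D - a^-1 *: (c *m b)).
Proof.
move=> a0.
have -> : (block_mx (a%:M) b c D : 'M[R]_(1 + n)) =
   block_mx 1%:M 0 (a^-1 *: c) 1%:M *m block_mx (a%:M) b 0 (D - a^-1 *: (c *m b)).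
  rewrite mulmx_block ?mul1mx ?mul0mx ?mulmx0 ?addr0 ?add0r mul_mx_scalar scalerA mulfV //.
  by rewrite scale1r -scalemxAl addrC subrK.
by rewrite det_mulmx det_lblock det_ublock !det1 det_scalar1 !mul1r.
Qed.


Lemma bil_delta (R : realType) n (M : 'M[R]_n) i : bil M (delta_mx i 0) (delta_mx i 0) = M i i.
Proof. by rewrite /bil trmx_delta -rowE -colE !mxE. Qed.

Lemma delta_neq0 (R : realType) n (i : 'I_n) : (delta_mx i 0 : 'cV[R]_n) != 0.
Proof.
apply/eqP => /matrixP /(_ i 0); rewrite !mxE !eqxx /= => /eqP; by rewrite oner_eq0.
Qed.

Lemma pd_diag (R : realType) n (M : 'M[R]_n) i : pd M -> 0 < M i i.
Proof. by case=> _ h; rewrite -bil_delta; apply: h; apply: delta_neq0. Qed.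

Lemma col_neq0 (R : realType) m1 m2 k (A : 'M[R]_(m1, k)) (B : 'M[R]_(m2, k)) :
  (A != 0) || (B != 0) -> (col_mx A B != 0).
Proof. by rewrite col_mx_eq0 negb_and. Qed.

Lemma hadamard (R : realType) n (M : 'M[R]_n) : pd M -> 0 < \det M /\ \det M <= \prod_i M i i.
Proof.
elim: n M => [|n IH] M hM.
  by rewrite det_mx00 big_ord0; split; [exact: ltr01|].
pose M1 : 'M[R]_(1 + n) := M.
set a := ulsubmx M1 0 0; set b := ursubmx M1; set c := dlsubmx M1; set D := drsubmx M1.
have hb : M1 = block_mx (a%:M) b c D by rewrite -mx11_scalar submxK.
have [hsym hpos] := hM.
have hc : c = b^T by rewrite /c /b trmx_ursub hsym.
have hD : D^T = D by rewrite /D trmx_drsub hsym.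
have hbil w (y : 'cV[R]_n) : bil M1 (col_mx (w%:M) y) (col_mx (w%:M) y) =
   a * w ^+ 2 + w * (b *m y) 0 0 + w * (y^T *m c) 0 0 + bil D y y.
  by rewrite -bil_block -hb.
have ha : 0 < a.
  have := hpos (col_mx (1%:M : 'cV[R]_1) (0 : 'cV[R]_n)); rewrite hbil !mulmx0 trmx0 mul0mx /bil !mulmx0 !mxE.
  rewrite expr1n !mul1r !addr0 mulr1; apply.
  have h := @col_neq0 R 1 n 1 1%:M 0; apply: h; apply/orP; left; apply/eqP => /matrixP /(_ 0 0); rewrite !mxE /= => /eqP; by rewrite oner_eq0.
pose S := D - a^-1 *: (c *m b).
have hS : pd S.
  split.
    by rewrite /S linearD linearN linearZ /= trmx_mul hc trmxK hD.
  move=> y y0.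
  pose beta := (b *m y) 0 0.
  have := hpos (col_mx ((- (a^-1 * beta))%:M : 'cV[R]_1) y).
  rewrite hbil; have -> : (y^T *m c) 0 0 = beta.
    by rewrite /beta hc -trmx_mul mxE.
  have -> : bil S y y = bil D y y - a^-1 * beta ^+ 2.
    rewrite /S bilMD bilMN bilMZ.
    have -> : bil (c *m b) y y = (y^T *m c) 0 0 * (b *m y) 0 0.
      by rewrite /bil !mulmxA -(mulmxA _ _ y) mx11_mulE.
    have -> : (y^T *m c) 0 0 = beta by rewrite /beta hc -trmx_mul mxE.
    by rewrite expr2.
  move=> h; have : 0 < a * (- (a^-1 * beta)) ^+ 2 + - (a^-1 * beta) * beta + - (a^-1 * beta) * beta + bil D y y.
    by apply: h; have h2 := @col_neq0 R 1 n 1 ((- (a^-1 * beta))%:M) y; apply: h2; rewrite y0 orbT.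
  have ai : a * a^-1 = 1 by rewrite mulfV //; apply/eqP => a0; move: ha; rewrite a0 ltxx.
  move=> h'; have -> : bil D y y - a^-1 * beta ^+ 2 = a * (- (a^-1 * beta)) ^+ 2 + - (a^-1 * beta) * beta + - (a^-1 * beta) * beta + bil D y y.
    set k := a^-1; have -> : a * (- (k * beta)) ^+ 2 = (a * k) * (k * beta ^+ 2) by ring.
    rewrite ai; ring.
  exact: h'.
have [IH1 IH2] := IH S hS.
have hdet : \det M = a * \det S by rewrite -[M]/M1 hb det_block1 //; apply/eqP => a0; move: ha; rewrite a0 ltxx.
have hprod : \prod_(i < n.+1) M i i = a * \prod_i D i i.
  rewrite big_ord_recl; congr (_ * _).
    by rewrite /a !mxE; f_equal; apply: val_inj.
  by apply: eq_bigr => i _; rewrite /D !mxE; f_equal; apply: ord_inj.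
rewrite hdet hprod; split; first exact: mulr_gt0.
rewrite ler_pM2l //; apply: (le_trans IH2); apply: ler_prod => i _.
rewrite (ltW (pd_diag i hS)) /= /S [X in X <= _]mxE gerDl !mxE big_ord1 hc !mxE oppr_le0.
by rewrite -expr2 mulr_ge0 ?sqr_ge0 // invr_ge0 ltW.
Qed.


Lemma pd_unit (R : realType) n (M : 'M[R]_n) : pd M -> M \in unitmx.
Proof.
by move=> /hadamard [h _]; rewrite unitmxE unitfE gt_eqF.
Qed.

Lemma pd_inv (R : realType) n (M : 'M[R]_n) : pd M -> pd (invmx M).
Proof.
move=> hM; have hu := pd_unit hM; case: hM => hs hp; split.
  by rewrite trmx_inv hs.
move=> x x0; pose y := invmx M *m x.
have hx : x = M *m y by rewrite /y mulKVmx.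
have y0 : y != 0 by apply: contraNneq x0 => e; rewrite hx e mulmx0.
rewrite hx /bil trmx_mul hs -!mulmxA mulKmx // mulmxA.
exact: hp.
Qed.

Lemma pd_psd (R : realType) n (M : 'M[R]_n) : pd M -> psd M.
Proof.
case=> hs hp; split => // x; have [->|x0] := eqVneq x 0.
  by rewrite /bil mulmx0 mxE.
exact: ltW (hp x x0).
Qed.

Lemma pd_add_psd (R : realType) n (A B : 'M[R]_n) : pd A -> psd B -> pd (A + B).
Proof.
case=> hsA hpA [hsB hpB]; split; first by rewrite linearD /= hsA hsB.
by move=> x x0; rewrite bilMD; apply: ltr_wpDr (hpB x) (hpA x x0).
Qed.

Lemma psd_rank1 (R : realType) n (f : 'cV[R]_n) : psd (f *m f^T).
Proof.
split; first by rewrite trmx_mul trmxK.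
by move=> x; rewrite bil_rank1 bil1_sym -expr2 sqr_ge0.
Qed.

Lemma pd_scalar (R : realType) n (lam : R) : 0 < lam -> pd (lam%:M : 'M[R]_n).
Proof.
move=> hl; split; first by rewrite tr_scalar_mx.
move=> x x0; rewrite -scalemx1 bilMZ mulr_gt0 //; exact: sqr_pos.
Qed.

Lemma pd_add_sum (R : realType) n (A : 'M[R]_n) (f : nat -> 'cV[R]_n) s :
  pd A -> pd (A + \sum_(t < s) (f t *m (f t)^T)).
Proof.
move=> hA; elim: s => [|s IH]; first by rewrite big_ord0 addr0.
by rewrite big_ord_recr /= addrA; apply: pd_add_psd => //; apply: psd_rank1.
Qed.

Lemma det_rank1 (R : realType) n (u v : 'cV[R]_n) :
  \det (1%:M + u *m v^T) = 1 + (v^T *m u) 0 0.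
Proof.
pose Bm : 'M[R]_(1 + n) := block_mx 1%:M (- v^T) u 1%:M.
have e1 : Bm = block_mx 1%:M 0 u 1%:M *m block_mx 1%:M (- v^T) 0 (1%:M + u *m v^T).
  rewrite mulmx_block ?mul1mx ?mul0mx ?mulmx0 ?addr0 ?add0r ?mulmx1 ?mul1mx //.
  by rewrite mulmxN addrCA addNr addr0.
have e2 : Bm = block_mx 1%:M (- v^T) 0 1%:M *m block_mx (1%:M + v^T *m u) 0 u 1%:M.
  rewrite mulmx_block ?mul1mx ?mul0mx ?mulmx0 ?addr0 ?add0r ?mulmx1 ?mul1mx //.
  by rewrite mulNmx addrK.
have := congr1 determinant e1; rewrite e2 !det_mulmx det_lblock det_ublock.
rewrite det_lblock det_ublock !det1 !mul1r mulr1 => <-.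
by rewrite det_mx11 !mxE.
Qed.


Lemma det_update (R : realType) n (M : 'M[R]_n) (f : 'cV[R]_n) : M \in unitmx ->
  \det (M + f *m f^T) = \det M * (1 + bil (invmx M) f f).
Proof.
move=> hu.
have -> : M + f *m f^T = M *m (1%:M + (invmx M *m f) *m f^T).
  by rewrite mulmxDr mulmx1 !mulmxA mulmxV // mul1mx.
by rewrite det_mulmx det_rank1 /bil mulmxA.
Qed.

Lemma sherman (R : realType) n (M : 'M[R]_n) (f w : 'cV[R]_n) : pd M ->
  bil (invmx (M + f *m f^T)) w w =
  bil (invmx M) w w - (bil (invmx M) w f) ^+ 2 / (1 + bil (invmx M) f f).
Proof.
move=> hM; have hu := pd_unit hM.
have hMi := pd_inv hM; have [hsi hpi] := hMi.
set y := bil (invmx M) f f.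
have y0 : 0 <= y by have [_ ] := pd_psd hMi; apply.
set c := (1 + y)^-1.
have hc : c * (1 + y) = 1 by rewrite mulVf // gt_eqF // ltr_wpDr.
pose u := invmx M *m f.
pose X := invmx M - c *: (u *m u^T).
have hN : pd (M + f *m f^T) by apply: pd_add_psd => //; apply: psd_rank1.
have hNu := pd_unit hN.
have hX : (M + f *m f^T) *m X = 1%:M.
  have hMu : M *m u = f by rewrite /u mulKVmx.
  have hfu : f^T *m u = y%:M by rewrite /u mulmxA [LHS]mx11_scalar.
  have hut : u^T = f^T *m invmx M by rewrite /u trmx_mul hsi.
  have e1 : M *m (u *m u^T) = f *m u^T by rewrite mulmxA hMu.
  have e2 : f *m f^T *m (u *m u^T) = y *: (f *m u^T).
    by rewrite -mulmxA (mulmxA f^T) hfu mul_scalar_mx scalemxAr.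
  have e3 : f *m f^T *m invmx M = f *m u^T by rewrite hut mulmxA.
  rewrite /X mulmxBr mulmxDl mulmxV // -scalemxAr mulmxDl e1 e2 e3.
  set P := f *m u^T.
  rewrite -addrA.
  have -> : P - c *: (P + y *: P) = (1 - c * (1 + y)) *: P.
    by rewrite scalerBl scale1r mulrDr mulr1 scalerDl scalerDr scalerA.
  by rewrite hc subrr scale0r addr0.
have -> : invmx (M + f *m f^T) = X.
  by rewrite -[RHS]mul1mx -(mulVmx hNu) -mulmxA hX mulmx1.
rewrite /X bilMD bilMN bilMZ.
have -> : bil (u *m u^T) w w = bil (invmx M) w f ^+ 2.
  rewrite /bil !mulmxA -(mulmxA _ _ w) mx11_mulE.
  have -> : u^T *m w = (w^T *m invmx M *m f)^T by rewrite -mulmxA !trmx_mul trmxK.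
  by rewrite [X in _ * X]mxE expr2.
by rewrite mulrC.
Qed.


Lemma batch (R : realType) n (L : 'M[R]_n) (f : nat -> 'cV[R]_n) s (ws : seq 'cV[R]_n) : pd L ->
  \det L * (1 + \sum_(t < s) bil (invmx L) (f t) (f t) + \sum_(w <- ws) bil (invmx L) w w)
  <= \det (L + \sum_(t < s) (f t *m (f t)^T)) *
     (1 + \sum_(w <- ws) bil (invmx (L + \sum_(t < s) (f t *m (f t)^T))) w w).
Proof.
move=> hL; elim: s ws => [|s IH] ws.
  by rewrite !big_ord0 !addr0.
have hM := pd_add_sum f s hL.
set M := L + \sum_(t < s) (f t *m (f t)^T) in hM IH *.
have -> : L + \sum_(t < s.+1) (f t *m (f t)^T) = M + f s *m (f s)^T.
  by rewrite big_ord_recr /= addrA.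
rewrite big_ord_recr /=.
have -> : 1 + (\sum_(i < s) bil (invmx L) (f i) (f i) + bil (invmx L) (f s) (f s)) +
   \sum_(w <- ws) bil (invmx L) w w =
   1 + \sum_(i < s) bil (invmx L) (f i) (f i) + \sum_(w <- f s :: ws) bil (invmx L) w w.
  by rewrite big_cons; ring.
apply: (le_trans (IH (f s :: ws))); rewrite big_cons.
rewrite det_update ?pd_unit //.
have hMi := pd_inv hM; have hps := pd_psd hMi.
set y := bil (invmx M) (f s) (f s).
have y0 : 0 <= y by case: hps => _; apply.
have y1 : 1 + y != 0 by rewrite gt_eqF // ltr_wpDr.
have hdet : 0 < \det M by have [] := hadamard hM.
rewrite -mulrA ler_pM2l // addrA.
under [X in _ <= _ * (1 + X)]eq_bigr => w _ do rewrite sherman //.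
rewrite mulrDr mulr1 lerD2l mulr_sumr.
apply: ler_sum => w _; rewrite -/y.
have := bil_CS w (f s) hps; rewrite -/y.
set q := bil (invmx M) w w; set c := bil (invmx M) w (f s).
have q0 : 0 <= q by case: hps => _; apply.
move=> hcs.
rewrite mulrBr [(1 + y) * (_ / _)]mulrC divfK //.
nra.
Qed.


Lemma ln_tangent (R : realType) (a z : R) : 0 < a -> 0 < z -> ln a <= ln z + (a / z - 1).
Proof.
move=> ha hz.
have -> : ln a = ln z + ln (a / z).
  by rewrite -lnM ?posrE ?divr_gt0 // mulrC divfK // gt_eqF.
rewrite lerD2l.
have := @le_ln1Dx R (a / z - 1); have -> : 1 + (a / z - 1) = a / z by ring. apply.
by rewrite ltrBrDl subrr divr_gt0.
Qed.

Lemma jensen (R : realType) (m : nat) (x : 'I_m -> R) : (0 < m)%N -> (forall t, 0 <= x t) ->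
  m%:R^-1 * \sum_(t < m) ln (1 + m%:R * x t) <= ln (1 + \sum_(t < m) x t).
Proof.
move=> hm hx; set S := \sum_(t < m) x t.
have S0 : 0 <= S by apply: sumr_ge0.
have hz : 0 < 1 + S by rewrite ltr_wpDr.
have hmR : 0 < m%:R :> R by rewrite ltr0n.
have h t : ln (1 + m%:R * x t) <= ln (1 + S) + ((1 + m%:R * x t) / (1 + S) - 1).
  by apply: ln_tangent hz; rewrite ltr_wpDr // mulr_ge0 // ltW.
rewrite ler_pdivrMl //.
apply: (le_trans (ler_sum _ (fun t _ => h t))).
rewrite big_split /= sumr_const card_ord.
have -> : \sum_(i < m) ((1 + m%:R * x i) / (1 + S) - 1) = 0.
  rewrite sumrB sumr_const card_ord -mulr_suml big_split /= sumr_const card_ord -mulr_sumr.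
  by rewrite -/S -[_ *+ m]mulr_natl mulr1 -{1}(mulr1 m%:R) -mulrDr mulfK ?gt_eqF // subrr.
by rewrite addr0 mulr_natl.
Qed.


Lemma Lambda_pd (R : realType) (lam : R) d (n : nat -> nat) (phi : nat -> nat -> 'cV[R]_d) k :
  0 < lam -> pd (Lambda lam n phi k).
Proof.
move=> hl; elim: k => [|k IH] /=; first exact: pd_scalar.
exact: pd_add_sum.
Qed.

Lemma Lambda_tr (R : realType) (lam : R) d (n : nat -> nat) (phi : nat -> nat -> 'cV[R]_d) k :
  \tr (Lambda lam n phi k) = lam *+ d + \sum_(j < k) \sum_(t < n j) bil 1%:M (phi j t) (phi j t).
Proof.
elim: k => [|k IH] /=; first by rewrite mxtrace_scalar big_ord0 addr0.
rewrite mxtraceD IH big_ord_recr /= -addrA; congr (_ + (_ + _)).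
rewrite raddf_sum; apply: eq_bigr => t _.
by rewrite /= mxtrace_mulC /bil mulmx1 /mxtrace big_ord1.
Qed.

Lemma AGM_diag (R : realType) d (M : 'M[R]_d) : (forall i, 0 <= M i i) ->
  \prod_i M i i <= (\tr M / d%:R) ^+ d.
Proof.
move=> h.
have := @leif_AGM R _ predT (fun i => M i i) (fun i _ => h i).
rewrite card_ord => -[hle _]; exact: hle.
Qed.


Unset Implicit Arguments.

Theorem mainTheorem10 (R : realType) (lam B H : R) (d K T : nat)
    (n : nat -> nat) (phi : nat -> nat -> 'cV[R]_d) :
  0 < lam -> 0 < B -> 0 < H -> (1 <= d)%N -> (1 <= K)%N ->
  (forall k, (k < K)%N -> (0 < n k)%N) ->
  (\sum_(k < K) n k <= T)%N ->
  (forall k t, (k < K)%N -> (t < n k)%N -> norm2 (phi k t) <= B * H) ->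
  \sum_(k < K) ((n k)%:R^-1 *
     \sum_(t < n k) ln (1 + (n k)%:R * (mnorm (invmx (Lambda lam n phi k)) (phi k t)) ^+ 2))
  <= d%:R * ln (1 + B ^+ 2 * H ^+ 2 * T%:R / (lam * d%:R)).
Proof.
move=> hl hB hH hd hK hn hT hphi.
have hpd k : pd (Lambda lam n phi k) := Lambda_pd n phi k hl.
have hdet k : 0 < \det (Lambda lam n phi k) by case: (hadamard (hpd k)).
have hblk (k : 'I_K) : (n k)%:R^-1 * \sum_(t < n k)
    ln (1 + (n k)%:R * mnorm (invmx (Lambda lam n phi k)) (phi k t) ^+ 2) <=
    ln (\det (Lambda lam n phi k.+1)) - ln (\det (Lambda lam n phi k)).
  have hx t : 0 <= bil (invmx (Lambda lam n phi k)) (phi k t) (phi k t).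
    by case: (pd_psd (pd_inv (hpd k))) => _; apply.
  have -> : \sum_(t < n k) ln (1 + (n k)%:R * mnorm (invmx (Lambda lam n phi k)) (phi k t) ^+ 2)
     = \sum_(t < n k) ln (1 + (n k)%:R * bil (invmx (Lambda lam n phi k)) (phi k t) (phi k t)).
    by apply: eq_bigr => t _; rewrite /mnorm sqr_sqrtr //; exact: hx.
  have hj := @jensen R (n k) (fun t : 'I_(n k) => bil (invmx (Lambda lam n phi k)) (phi k t) (phi k t))
     (hn k (ltn_ord k)) (fun t => hx t).
  simpl in hj. apply: (le_trans hj).
  have hb := batch (phi k) (n k) [::] (hpd k).
  rewrite !big_nil !addr0 mulr1 in hb.
  have hS : 0 < 1 + \sum_(t < n k) bil (invmx (Lambda lam n phi k)) (phi k t) (phi k t).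
    by rewrite ltr_wpDr // sumr_ge0.
  rewrite -ln_div ?posrE // ler_ln ?posrE ?divr_gt0 //.
  by rewrite ler_pdivlMr // mulrC.
apply: (le_trans (ler_sum _ (fun k _ => hblk k))).
have -> : \sum_(k < K) (ln (\det (Lambda lam n phi k.+1)) - ln (\det (Lambda lam n phi k)))
   = ln (\det (Lambda lam n phi K)) - ln (\det (Lambda lam n phi 0)).
  by rewrite -(big_mkord xpredT (fun k => ln (\det (Lambda lam n phi k.+1)) - ln (\det (Lambda lam n phi k)))) telescope_sumr.
rewrite /= det_scalar lnXn //.
set Q := \sum_(j < K) \sum_(t < n j) bil 1%:M (phi j t) (phi j t).
have hP : \tr (Lambda lam n phi K) = lam *+ d + Q by rewrite Lambda_tr.
have hb1 f : 0 <= bil (1%:M : 'M[R]_d) f f.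
  by case: (pd_psd (pd_scalar d (@ltr01 R))) => _; apply.
have Q0 : 0 <= Q by apply: sumr_ge0 => j _; apply: sumr_ge0 => t _; apply: hb1.
have hQ : Q <= B ^+ 2 * H ^+ 2 * T%:R.
  apply: (@le_trans _ _ (\sum_(j < K) ((B * H) ^+ 2 *+ n j))).
    apply: ler_sum => j _.
    apply: (@le_trans _ _ (\sum_(t < n j) (B * H) ^+ 2)); last by rewrite sumr_const card_ord.
    apply: ler_sum => t _.
    have h1 := hphi j t (ltn_ord j) (ltn_ord t).
    have h0 : 0 <= norm2 (phi j t) by apply: sqrtr_ge0.
    have -> : bil 1%:M (phi j t) (phi j t) = norm2 (phi j t) ^+ 2.
      by rewrite /norm2 sqr_sqrtr /bil ?mulmx1 //; have := hb1 (phi j t); rewrite /bil mulmx1.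
    by rewrite !expr2 ler_pM.
  rewrite sumrMnr exprMn -[_ *+ _]mulr_natr ler_pM2l ?mulr_gt0 ?exprn_gt0 // ler_nat.
  exact: hT.
have hdR : 0 < d%:R :> R by rewrite ltr0n.
have hPpos : 0 < \tr (Lambda lam n phi K) by rewrite hP ltr_wpDr // pmulrn_rgt0.
have hAGM := AGM_diag (fun i => ltW (pd_diag i (hpd K))).
have hhad := (hadamard (hpd K)).2.
have h1 : ln (\det (Lambda lam n phi K)) <= ln (\tr (Lambda lam n phi K) / d%:R) *+ d.
  rewrite -lnXn ?divr_gt0 // ler_ln ?posrE ?exprn_gt0 ?divr_gt0 //.
  exact: le_trans hhad hAGM.
apply: (@le_trans _ _ (ln (\tr (Lambda lam n phi K) / d%:R) *+ d - ln lam *+ d)).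
  by rewrite lerD2r.
rewrite -mulrnBl -[_ *+ d]mulr_natl ler_pM2l // -ln_div ?posrE ?divr_gt0 //.
rewrite ler_ln ?posrE ?divr_gt0 //; last first.
  by rewrite ltr_wpDr // divr_ge0 ?mulr_ge0 ?exprn_ge0 ?ler0n ?ltW // mulr_gt0.
rewrite hP.
have -> : (lam *+ d + Q) / d%:R / lam = 1 + Q / (lam * d%:R).
  by rewrite -mulr_natr; field; rewrite ?gt_eqF.
rewrite lerD2l ler_pM2r // invr_gt0 mulr_gt0 //.
Qed.
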